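(* Let $\sigma$ be a realizable multiset. If $\sigma=\sigma_1\cup\dots\cup\sigma_k$ (union of multisets, i.e. $\sigma_1,\dots,\sigma_k$ partition $\sigma$ counting multiplicity), where each $\sigma_i$ is realizable, then $s_1(\sigma_i)\le s_1(\sigma)$ for every $i$.
   Context: A multiset $\sigma=\{\lambda_1,\dots,\lambda_n\}$ of complex numbers is realizable if there exists an $n\times n$ matrix with all entries real and nonnegative whose eigenvalues, counted with algebraic multiplicity, are exactly $\lambda_1,\dots,\lambda_n$. For a multiset $\tau$, $s_1(\tau)$ denotes the sum of its elements counted with multiplicity. *)

(* Defs.v *)
From HB Require Import structures.
From mathcomp Require Import all_boot all_order all_algebra.
From mathcomp Require Import complex.
Set Implicit Arguments. Unset Strict Implicit. Unset Printing Implicit Defensive.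
Import Order.TTheory GRing.Theory Num.Theory.
Local Open Scope ring_scope.

(* Complex numbers are R[i] for a real closed field R (e.g. the reals).
   A multiset of complex numbers is a sequence up to permutation. *)

Definition realizable (R : rcfType) (sigma : seq R[i]) : Prop :=
  exists A : 'M[R]_(size sigma),
    (forall i j, 0 <= A i j) /\
    char_poly (map_mx (real_complex R) A) = \prod_(l <- sigma) ('X - l%:P).

Definition s1 (R : rcfType) (tau : seq R[i]) : R[i] := \sum_(l <- tau) l.

(* Main.v *)
Require Import Defs.
From HB Require Import structures.
From mathcomp Require Import all_boot all_order all_algebra.
From mathcomp Require Import complex.
Import Order.TTheory GRing.Theory Num.Theory.
Local Open Scope ring_scope.

Lemma s1_ge0 (R : rcfType) (tau : seq R[i]) : realizable tau -> 0 <= s1 tau.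
Proof.
case=> A [A0 hA].
have [/size0nil -> | nz] := eqVneq (size tau) 0%N.
  by rewrite /s1 big_nil.
have : s1 tau = - (\prod_(l <- tau) ('X - l%:P))`_((size tau).-1).
  by rewrite coefPn_prod_XsubC // opprK.
move=> ->; rewrite -hA char_poly_trace ?lt0n // opprK.
rewrite trace_map_mx ler0c /mxtrace.
by apply: sumr_ge0 => i _.
Qed.

Theorem lemma1 (R : rcfType) (sigma : seq R[i]) (parts : seq (seq R[i])) :
  realizable sigma ->
  perm_eq sigma (flatten parts) ->
  (forall tau, tau \in parts -> realizable tau) ->
  forall tau, tau \in parts -> s1 tau <= s1 sigma.
Proof.
move=> _ hp hr tau htau.
have -> : s1 sigma = \sum_(t <- parts) s1 t.
  rewrite /s1 (perm_big _ hp) /=.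
  elim: parts {hp hr htau} => [|t ps IH]; first by rewrite !big_nil.
  by rewrite /= big_cat big_cons IH.
rewrite (big_rem tau htau) /= lerDl.
rewrite big_seq; apply: sumr_ge0 => t ht.
by apply: s1_ge0; apply: hr; apply: (mem_rem ht).
Qed.
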